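(* Let $n\ge 2$ and $q$ a prime power. The association scheme $\mathcal X(GU(n,q),\Phi(n,q))$ is commutative (i.e., $p_{ij}^h=p_{ji}^h$ for all $h,i,j$) if and only if $q=2$.
   Context: $\Phi(n,q)=\{x\in\mathbb{F}_{q^2}^n\setminus\{0\}:\langle x,x\rangle=0\}$ with $\langle x,y\rangle=\sum_k x_k y_k^{\,q}$. $\mathcal X(GU(n,q),\Phi(n,q))$ is the Schurian association scheme on $\Phi(n,q)$ whose relations are the orbitals (orbits on $\Phi(n,q)\times\Phi(n,q)$) of $GU(n,q)=\{U\in GL_n(\mathbb{F}_{q^2}):U\bar U^T=I\}$ acting by $x\mapsto xU$. For relations $R_h,R_i,R_j$, $p_{ij}^h=|\{z:(x,z)\in R_i,(z,y)\in R_j\}|$ for any $(x,y)\in R_h$. *)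

(* Defs.v *)
From HB Require Import structures.
From mathcomp Require Import all_boot all_order all_algebra all_field.
Set Implicit Arguments. Unset Strict Implicit. Unset Printing Implicit Defensive.
Import GRing.Theory.
Local Open Scope ring_scope.

(* F plays the role of F_{q^2}; the "bar" map is the Frobenius x |-> x^q. *)

Definition herm (F : finFieldType) (n q : nat) (x y : 'rV[F]_n) : F :=
  \sum_(k < n) x ord0 k * (y ord0 k) ^+ q.

Definition Phi (F : finFieldType) (n q : nat) : pred 'rV[F]_n :=
  fun x => (x != 0) && (herm q x x == 0).

Definition in_GU (F : finFieldType) (n q : nat) (U : 'M[F]_n) : bool :=
  U *m (map_mx (fun a : F => a ^+ q) U)^T == 1%:M.

Definition orbital (F : finFieldType) (n q : nat) (a b x y : 'rV[F]_n) : bool :=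
  [exists U : 'M[F]_n, [&& in_GU q U, x == a *m U & y == b *m U]].

(* Commutativity of the Schurian scheme X(GU(n,q), Phi(n,q)):
   for all relations R_i = orbital (a,b), R_j = orbital (c,d) (with
   (a,b),(c,d) in Phi x Phi) and every pair (x,y) in Phi x Phi (which lies in
   some relation R_h), p_ij^h = p_ji^h, i.e.
   #{z in Phi | (x,z) in R_i, (z,y) in R_j}
     = #{z in Phi | (x,z) in R_j, (z,y) in R_i}. *)
Definition scheme_commutative (F : finFieldType) (n q : nat) : Prop :=
  forall a b c d x y : 'rV[F]_n,
    Phi q a -> Phi q b -> Phi q c -> Phi q d -> Phi q x -> Phi q y ->
    #|[pred z | Phi q z && orbital q a b x z && orbital q c d z y]|
    = #|[pred z | Phi q z && orbital q c d x z && orbital q a b z y]|.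

(* Main.v *)
Require Import Defs.
From mathcomp Require Import all_boot all_order all_algebra all_field.
From mathcomp Require Import all_fingroup all_solvable.
From mathcomp.algebra_tactics Require Import ring.
From mathcomp Require Import zify.
Set Implicit Arguments. Unset Strict Implicit. Unset Printing Implicit Defensive.
Import GRing.Theory.
Local Open Scope ring_scope.

Section Herm.
Variables (F : finFieldType) (q : nat).
Hypothesis cD : forall x y : F, (x + y) ^+ q = x ^+ q + y ^+ q.
Variable n : nat.
Local Notation h := (@herm F n q).

Lemma hD1 (x y z : 'rV[F]_n) : h (x + y) z = h x z + h y z.
Proof. rewrite /herm -big_split /=; apply: eq_bigr => k _; by rewrite mxE mulrDl. Qed.
Lemma hZ1 a (x z : 'rV[F]_n) : h (a *: x) z = a * h x z.
Proof. rewrite /herm mulr_sumr; apply: eq_bigr => k _; by rewrite mxE mulrA. Qed.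
Lemma hD2 (x y z : 'rV[F]_n) : h x (y + z) = h x y + h x z.
Proof. rewrite /herm -big_split /=; apply: eq_bigr => k _; by rewrite mxE cD mulrDr. Qed.
Lemma hZ2 a (x y : 'rV[F]_n) : h x (a *: y) = a ^+ q * h x y.
Proof. rewrite /herm mulr_sumr; apply: eq_bigr => k _; by rewrite mxE exprMn mulrCA. Qed.

Lemma c0 : (0 : F) ^+ q = 0.
Proof. have H := cD 0 0; rewrite addr0 in H; by apply: (@addrI _ (0 ^+ q)); rewrite -H addr0. Qed.

Lemma map_mxM_c m k p (A : 'M[F]_(m,k)) (B : 'M[F]_(k,p)) :
  map_mx (fun a => a ^+ q) (A *m B) = map_mx (fun a => a ^+ q) A *m map_mx (fun a => a ^+ q) B.
Proof.
apply/matrixP => i j; rewrite !mxE (big_morph (fun a : F => a ^+ q) cD c0).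
by apply: eq_bigr => l _; rewrite !mxE exprMn.
Qed.

Lemma herm_mx (a b : 'rV[F]_n) : h a b = (a *m (map_mx (fun x => x ^+ q) b)^T) ord0 ord0.
Proof. rewrite /herm !mxE; apply: eq_bigr => k _; by rewrite !mxE. Qed.

Lemma GU_inv (W : 'M[F]_n) (a b : 'rV[F]_n) : in_GU q W -> h (a *m W) (b *m W) = h a b.
Proof.
move=> /eqP HW; rewrite !herm_mx map_mxM_c trmx_mul mulmxA -(mulmxA a W) HW mulmx1 //.
Qed.
End Herm.

Section F4.
Variable F : finFieldType.
Hypothesis F4 : #|F| = 4%N.

Lemma ch2 : (2%N \in [pchar F]).
Proof. by apply: (@card_finPcharP F 2 2). Qed.

Lemma addxx (x : F) : x + x = 0.
Proof. by rewrite -mulr2n -mulr_natr (pcharf0 ch2) mulr0. Qed.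

Lemma cD2 (x y : F) : (x + y) ^+ 2 = x ^+ 2 + y ^+ 2.
Proof. by rewrite sqrrD -mulr_natr (pcharf0 ch2) mulr0 addr0. Qed.

Lemma c4 (x : F) : x ^+ 4 = x.
Proof. by have := expf_card x; rewrite F4. Qed.

Lemma cc (x : F) : (x ^+ 2) ^+ 2 = x.
Proof. by rewrite -exprM c4. Qed.

Lemma c3 (x : F) : x != 0 -> x ^+ 3 = 1.
Proof. move=> nz; apply: (mulfI nz); by rewrite -exprS c4 mulr1. Qed.

Lemma omega_ex : exists w : F, w ^+ 2 + w = 1.
Proof.
have : exists w : F, (w != 0) && (w != 1).
  apply/existsP; apply: contraT; rewrite negb_exists => /forallP H.
  have : (#|F| <= #|[set (0:F)%R; (1:F)%R]|)%N.
    apply: subset_leq_card; apply/subsetP => x _; rewrite !inE.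
    by move: (H x); rewrite negb_and !negbK orbC.
  rewrite F4 cards2; by case: (_ == _).
case=> w /andP [w0 w1]; exists w.
have : (w - 1) * (w ^+ 2 + w + 1) = 0.
  have e : (w - 1) * (w ^+ 2 + w + 1) = w ^+ 3 - 1 by ring.
  by rewrite e c3 // subrr.
move/eqP; rewrite mulf_eq0 subr_eq0 (negbTE w1) /= => /eqP e.
by rewrite -(addr0 (_ + _)) -(addxx 1) addrA e add0r.
Qed.

Lemma sq_norm (x : F) : x != 0 -> x * x ^+ 2 = 1.
Proof. by move=> nz; rewrite -exprS c3. Qed.

End F4.

Section Vec.
Variable F : finFieldType.
Hypothesis F4 : #|F| = 4%N.
Variable n : nat.
Local Notation h := (@herm F n 2).
Local Notation cD := (cD2 F4).
Definition cv (z : 'rV[F]_n) := map_mx (fun x => x ^+ 2) z.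

Lemma c0' : (0 : F) ^+ 2 = 0. Proof. by rewrite expr2 mulr0. Qed.

Lemma hC (x y : 'rV[F]_n) : h y x = (h x y) ^+ 2.
Proof.
rewrite /herm (big_morph (fun a : F => a ^+ 2) cD c0'); apply: eq_bigr => k _.
by rewrite exprMn (cc F4) mulrC.
Qed.

Lemma hxx x : (h x x) ^+ 2 = h x x. Proof. by rewrite -hC. Qed.

Lemma hcv x y : h (cv x) (cv y) = h y x.
Proof. rewrite /herm; apply: eq_bigr => k _; by rewrite !mxE (cc F4) mulrC. Qed.

Lemma cvK : cancel cv cv.
Proof. by move=> z; apply/rowP => k; rewrite !mxE (cc F4). Qed.

Lemma cvZ a z : cv (a *: z) = a ^+ 2 *: cv z.
Proof. by apply/rowP => k; rewrite !mxE exprMn. Qed.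

Lemma cv0 : cv 0 = 0.
Proof. by apply/rowP => k; rewrite !mxE c0'. Qed.

Lemma h_delta i j : h (delta_mx 0 i) (delta_mx 0 j) = (i == j)%:R.
Proof.
rewrite /herm (bigD1 i) //= big1 => [|k /negbTE ki]; last by rewrite !mxE eq_sym ki mulr0n mul0r.
rewrite !mxE !eqxx /= mul1r addr0; by case: (i == j); rewrite ?expr1n ?c0'.
Qed.

Definition pres (U : 'M[F]_n) := forall z z', h (z *m U) (z' *m U) = h z z'.

Lemma pres_GU U : pres U -> in_GU 2 U.
Proof.
move=> P; apply/eqP/matrixP => i j; rewrite !mxE.
transitivity (h (delta_mx 0 i *m U) (delta_mx 0 j *m U)).
  rewrite -!rowE /herm; apply: eq_bigr => k _; by rewrite !mxE.
by rewrite P h_delta.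
Qed.

Lemma GU_pres U : in_GU 2 U -> pres U.
Proof. by move=> H z z'; apply: (GU_inv cD z z' H). Qed.

Lemma pres_mul U V : pres U -> pres V -> pres (U *m V).
Proof. by move=> PU PV z z'; rewrite !mulmxA PV PU. Qed.

Lemma pres1 : pres 1%:M.
Proof. by move=> z z'; rewrite !mulmx1. Qed.

Lemma pres_inj U : pres U -> injective (fun z : 'rV[F]_n => z *m U).
Proof.
move=> /pres_GU /eqP HU z z' /= E.
by rewrite -(mulmx1 z) -(mulmx1 z') -HU !mulmxA E.
Qed.

Lemma pres_Phi U z : pres U -> Phi 2 z -> Phi 2 (z *m U).
Proof.
move=> P /andP [nz iz]; apply/andP; split; last by rewrite P.
apply: contra nz => /eqP E; apply/eqP; apply: (pres_inj P); by rewrite /= E mul0mx.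
Qed.

Lemma Phi_cv z : Phi 2 z -> Phi 2 (cv z).
Proof.
move=> /andP [nz iz]; apply/andP; split; last by rewrite hcv.
apply: contra nz => /eqP E; by rewrite -(cvK z) E cv0.
Qed.

Definition outer (a b : 'rV[F]_n) : 'M[F]_n := (cv a)^T *m b.

Lemma outerE z a b : z *m outer a b = h z a *: b.
Proof. by rewrite /outer mulmxA [z *m _]mx11_scalar -herm_mx mul_scalar_mx. Qed.

Definition M2 e1 e2 (c11 c12 c21 c22 : F) : 'M[F]_n :=
  1%:M + c11 *: outer e1 e1 + c12 *: outer e1 e2 + c21 *: outer e2 e1 + c22 *: outer e2 e2.

Lemma M2E e1 e2 c11 c12 c21 c22 z : z *m M2 e1 e2 c11 c12 c21 c22 =
  z + (c11 * h z e1 + c21 * h z e2) *: e1 + (c12 * h z e1 + c22 * h z e2) *: e2.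
Proof.
rewrite /M2 !mulmxDr mulmx1 -!scalemxAr !outerE.
by apply/rowP => k; rewrite !mxE; ring.
Qed.

End Vec.

Section M2.
Variable F : finFieldType.
Hypothesis F4 : #|F| = 4%N.
Variable n : nat.
Local Notation h := (@herm F n 2).
Local Notation cD := (cD2 F4).

Lemma M2_pres (e1 e2 : 'rV[F]_n) c11 c12 c21 c22 :
 c11^+2 + c11 + (c11*h e1 e1*c11^+2 + c11*h e1 e2*c12^+2 + c12*h e2 e1*c11^+2 + c12*h e2 e2*c12^+2) = 0 ->
 c21^+2 + c12 + (c11*h e1 e1*c21^+2 + c11*h e1 e2*c22^+2 + c12*h e2 e1*c21^+2 + c12*h e2 e2*c22^+2) = 0 ->
 c12^+2 + c21 + (c21*h e1 e1*c11^+2 + c21*h e1 e2*c12^+2 + c22*h e2 e1*c11^+2 + c22*h e2 e2*c12^+2) = 0 ->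
 c22^+2 + c22 + (c21*h e1 e1*c21^+2 + c21*h e1 e2*c22^+2 + c22*h e2 e1*c21^+2 + c22*h e2 e2*c22^+2) = 0 ->
 pres (M2 e1 e2 c11 c12 c21 c22).
Proof.
move=> H11 H12 H21 H22 z z'; rewrite !M2E.
rewrite !(hD1 2, @hD2 _ 2 cD, hZ1 2, hZ2 2) (hC F4 z' e1) (hC F4 z' e2).
rewrite !cD !exprMn.
transitivity (h z z' + h z e1 * (h z' e1)^+2 * (c11^+2 + c11 + (c11*h e1 e1*c11^+2 + c11*h e1 e2*c12^+2 + c12*h e2 e1*c11^+2 + c12*h e2 e2*c12^+2))
  + h z e1 * (h z' e2)^+2 * (c21^+2 + c12 + (c11*h e1 e1*c21^+2 + c11*h e1 e2*c22^+2 + c12*h e2 e1*c21^+2 + c12*h e2 e2*c22^+2))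
  + h z e2 * (h z' e1)^+2 * (c12^+2 + c21 + (c21*h e1 e1*c11^+2 + c21*h e1 e2*c12^+2 + c22*h e2 e1*c11^+2 + c22*h e2 e2*c12^+2))
  + h z e2 * (h z' e2)^+2 * (c22^+2 + c22 + (c21*h e1 e1*c21^+2 + c21*h e1 e2*c22^+2 + c22*h e2 e1*c21^+2 + c22*h e2 e2*c22^+2))).
  ring.
by rewrite H11 H12 H21 H22 !mulr0 !addr0.
Qed.
End M2.

Section Maps.
Variable F : finFieldType.
Hypothesis F4 : #|F| = 4%N.
Variable n : nat.
Local Notation h := (@herm F n 2).
Local Notation cD := (cD2 F4).

Lemma vaddxx (v : 'rV[F]_n) : v + v = 0.
Proof. by apply/rowP => k; rewrite !mxE (addxx F4). Qed.

Lemma hyp_map (u1 u2 : 'rV[F]_n) (S : 'rV[F]_n -> Prop) :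
  h u1 u1 = 0 -> h u2 u2 = 0 -> h u1 u2 != 0 ->
  (forall s, S s -> h s u1 = 0 /\ h s u2 = 0) ->
  exists U, [/\ pres U, u1 *m U = u2 & forall s, S s -> s *m U = s].
Proof.
move=> i1 i2 nz HS; set t := h u1 u2.
have t3 : t ^+ 3 = 1 by apply: (c3 F4 nz).
have h21 : h u2 u1 = t ^+ 2 by rewrite (hC F4).
exists (M2 u1 u2 (t^+2) t (t^+2) (t^+2)); split.
- apply: (M2_pres F4); rewrite i1 i2 h21 -/t.
  + transitivity ((t^+3 - 1) * (2%:R * t + t^+2 + t^+4) + (1+1) * (t + t^+2)); first by ring.
    by rewrite t3 subrr (addxx F4) !mul0r addr0.
  + transitivity ((t^+3 - 1) * (3%:R * t + 2%:R * t^+4) + (1+1) * (2%:R * t)); first by ring.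
    by rewrite t3 subrr (addxx F4) !mul0r addr0.
  + transitivity ((t^+3 - 1) * (2%:R * t^+2 + t^+5) + (1+1) * (2%:R * t^+2)); first by ring.
    by rewrite t3 subrr (addxx F4) !mul0r addr0.
  + transitivity ((t^+3 - 1) * (2%:R * t + t^+4 + t^+5 + t^+2) + (1+1) * (t + t^+2)); first by ring.
    by rewrite t3 subrr (addxx F4) !mul0r addr0.
- rewrite M2E i1 -/t !mulr0 !add0r.
  have -> : t ^+ 2 * t = 1 by rewrite -exprSr.
  by rewrite !scale1r vaddxx add0r.
- move=> s /HS [e1 e2]; by rewrite M2E e1 e2 !mulr0 !addr0 !scale0r !addr0.
Qed.

Lemma eichler (w e : 'rV[F]_n) (r : F) :
  h w w = 0 -> h w e = 0 -> h e e = r + r ^+ 2 -> pres (M2 w e r 1 1 0).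
Proof.
move=> ww we ee; have ew : h e w = 0 by rewrite (hC F4) we expr2 mulr0.
apply: (M2_pres F4); rewrite ww we ew ee.
- transitivity ((1+1) * (r + r^+2)); first by ring.
  by rewrite (addxx F4) mul0r.
- transitivity ((1+1) * (1 : F)); first by ring. by rewrite (addxx F4) mul0r.
- transitivity ((1+1) * (1 : F)); first by ring. by rewrite (addxx F4) mul0r.
- by ring.
Qed.

End Maps.

Section Trans.
Variable F : finFieldType.
Hypothesis F4 : #|F| = 4%N.
Variable n : nat.
Local Notation h := (@herm F n 2).
Local Notation cD := (cD2 F4).
Local Notation hD2 := (@hD2 _ 2 cD).
Local Notation hD1 := (hD1 2).
Local Notation hZ1 := (hZ1 2).
Local Notation hZ2 := (hZ2 2).

Lemma rv_nz (u : 'rV[F]_n) : u != 0 -> exists k, u 0 k != 0.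
Proof.
move=> nz; have : [exists k, u 0 k != 0].
  apply: contraR nz; rewrite negb_exists => /forallP H.
  apply/eqP/rowP => k; rewrite !mxE; apply/eqP; exact: (negbNE (H k)).
by case/existsP => k; exists k.
Qed.

Lemma h_delta_r (x : 'rV[F]_n) k : h x (delta_mx 0 k) = x 0 k.
Proof.
rewrite /herm (bigD1 k) //= big1 => [|j /negbTE jk]; last by rewrite !mxE eq_sym jk /= (c0' F) mulr0.
by rewrite !mxE !eqxx /= expr1n mulr1 addr0.
Qed.

Lemma two_nonzero (u1 u2 : 'rV[F]_n) : u1 != 0 -> u2 != 0 ->
  exists z, (h u1 z != 0) && (h u2 z != 0).
Proof.
move=> /rv_nz [k k1] /rv_nz [l l2].
case: (boolP (u2 0 k != 0)) => k2; first by exists (delta_mx 0 k); rewrite !h_delta_r k1 k2.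
case: (boolP (u1 0 l != 0)) => l1; first by exists (delta_mx 0 l); rewrite !h_delta_r l1 l2.
exists (delta_mx 0 k + delta_mx 0 l); rewrite !hD2 !h_delta_r.
by rewrite (eqP (negbNE k2)) (eqP (negbNE l1)) add0r addr0 k1 l2.
Qed.

Lemma iso_correct (a z : 'rV[F]_n) (om : F) : om ^+ 2 + om = 1 -> h a a = 0 -> h a z != 0 ->
  h (z + (h z z * om / h a z) *: a) (z + (h z z * om / h a z) *: a) = 0.
Proof.
move=> hom aa nz; set k := (h z z * om / h a z).
rewrite !hD1 !hD2 !hZ1 !hZ2 aa !mulr0 ?addr0.
rewrite [h z a](hC F4).
have kp : k * h a z = h z z * om by rewrite /k mulfVK.
transitivity (h z z + (k * h a z) ^+ 2 + k * h a z); first by ring.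
rewrite kp exprMn (hxx F4) -(addrA _ _ (h z z * om)) -mulrDr [om ^+ 2 + om]hom mulr1.
exact: (addxx F4).
Qed.

Lemma T_rel (om : F) (u1 u2 : 'rV[F]_n) (S : 'rV[F]_n -> Prop) (P : 'rV[F]_n -> 'rV[F]_n) :
  om ^+ 2 + om = 1 ->
  Phi 2 u1 -> Phi 2 u2 ->
  (forall s, S s -> h s u1 = 0 /\ h s u2 = 0) ->
  (forall z s, S s -> h s (P z) = 0) ->
  (forall z, h u1 (P z) = h u1 z /\ h u2 (P z) = h u2 z) ->
  exists U, [/\ pres U, u1 *m U = u2 & forall s, S s -> s *m U = s].
Proof.
move=> hom /andP [nz1 /eqP i1] /andP [nz2 /eqP i2] HS HP HP2.
case: (boolP (h u1 u2 == 0)) => [/eqP o12|nz12]; last exact: hyp_map.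
have [z /andP [z1 z2]] := two_nonzero nz1 nz2.
set z' := P z.
have [e1 e2] := HP2 z.
have z1' : h u1 z' != 0 by rewrite /z' e1.
pose w := z' + (h z' z' * om / h u1 z') *: u1.
have ww : h w w = 0 by apply: iso_correct.
have w1 : h u1 w = h u1 z'.
  by rewrite /w hD2 hZ2 i1 mulr0 addr0.
have w2 : h u2 w = h u2 z.
  by rewrite /w hD2 hZ2 (hC F4 u1 u2) o12 (c0' F) mulr0 addr0.
have Sw : forall s, S s -> h s w = 0.
  move=> s Ss; rewrite /w hD2 hZ2 (HP z s Ss); have [-> _] := HS s Ss; by rewrite mulr0 addr0.
have [U1 [P1 E1 F1]] : exists U, [/\ pres U, u1 *m U = w & forall s, S s -> s *m U = s].
  apply: hyp_map => //; first by rewrite w1.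
  by move=> s Ss; split; [have [] := HS s Ss | exact: Sw].
have [U2 [P2 E2 F2]] : exists U, [/\ pres U, w *m U = u2 & forall s, S s -> s *m U = s].
  apply: hyp_map => //; first by rewrite (hC F4) w2 expf_neq0.
  by move=> s Ss; split; [exact: Sw | have [] := HS s Ss].
exists (U1 *m U2); split; first exact: pres_mul.
  by rewrite mulmxA E1.
by move=> s Ss; rewrite mulmxA F1 // F2.
Qed.

End Trans.

Section TypeH.
Variable F : finFieldType.
Hypothesis F4 : #|F| = 4%N.
Variable n : nat.
Local Notation h := (@herm F n 2).
Local Notation cD := (cD2 F4).
Local Notation hD2 := (@hD2 _ 2 cD).
Local Notation hD1 := (hD1 2).
Local Notation hZ1 := (hZ1 2).
Local Notation hZ2 := (hZ2 2).

Lemma Phi_iso (a : 'rV[F]_n) : Phi 2 a -> h a a = 0.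
Proof. by case/andP => _ /eqP. Qed.

Lemma typeH (om : F) (a b a' b' : 'rV[F]_n) : om ^+ 2 + om = 1 ->
  Phi 2 a -> Phi 2 b -> Phi 2 a' -> Phi 2 b' -> h a b = h a' b' -> h a b != 0 ->
  exists U, [/\ pres U, a *m U = a' & b *m U = b'].
Proof.
move=> hom Pa Pb Pa' Pb' Et nz.
have [U1 [P1 E1 _]] := T_rel F4 (S := fun _ => False) (P := id) hom Pa Pa'
  (fun _ f => False_ind _ f) (fun _ _ f => False_ind _ f) (fun _ => conj erefl erefl).
pose b1 := b *m U1.
have ib1 : h b1 b1 = 0 by rewrite /b1 P1 Phi_iso.
have ib' : h b' b' = 0 by rewrite Phi_iso.
have ia' : h a' a' = 0 by rewrite Phi_iso.
pose t := h a b.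
have t1 : h a' b1 = t by rewrite -E1 /b1 P1.
have t' : h a' b' = t by rewrite -Et.
pose ta := t ^+ 2.
have ta3 : ta ^+ 3 = 1 by apply: (c3 F4); rewrite expf_neq0.
have hb1a : h b1 a' = ta by rewrite (hC F4) t1.
pose r := h b1 b'.
pose e := ta ^+ 2 *: (b1 + b').
have a'e : h a' e = 0 by rewrite /e hZ2 hD2 t1 t' (addxx F4) mulr0.
have ee : h e e = r + r ^+ 2.
  rewrite /e hZ1 hZ2 !hD1 !hD2 ib1 ib' (hC F4 b1 b') -/r add0r addr0.
  transitivity ((ta ^+ 3) ^+ 2 * (r + r ^+ 2)); first by ring.
  by rewrite ta3 expr1n mul1r.
exists (U1 *m M2 a' e r 1 1 0); split.
- exact: (pres_mul P1 (eichler F4 ia' a'e ee)).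
- by rewrite mulmxA E1 M2E ia' a'e !mulr0 !addr0 !scale0r !addr0.
- rewrite mulmxA -/b1 M2E hb1a.
  have hb1e : h b1 e = ta * r.
    rewrite /e hZ2 hD2 ib1 add0r -/r.
    transitivity (ta ^+ 3 * ta * r); first by ring.
    by rewrite ta3 mul1r.
  rewrite hb1e.
  have -> : r * ta + 1 * (ta * r) = 0 by rewrite mul1r mulrC (addxx F4).
  have -> : 1 * ta + 0 * (ta * r) = ta by rewrite mul1r mul0r addr0.
  rewrite scale0r addr0.
  by rewrite /e scalerA -exprS ta3 scale1r addrA (vaddxx F4) add0r.
Qed.

End TypeH.

Section TypeO.
Variable F : finFieldType.
Hypothesis F4 : #|F| = 4%N.
Variable n : nat.
Local Notation h := (@herm F n 2).
Local Notation cD := (cD2 F4).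
Local Notation hD2 := (@hD2 _ 2 cD).
Local Notation hD1 := (hD1 2).
Local Notation hZ1 := (hZ1 2).
Local Notation hZ2 := (hZ2 2).

Lemma eq_of_add0 (a b : F) : a + b = 0 -> a = b.
Proof. by move=> e; rewrite -[b]add0r -e -addrA (addxx F4) addr0. Qed.

Lemma indep_kl (u v : 'rV[F]_n) : u != 0 -> (forall l : F, v != l *: u) ->
  exists k l, v 0 k * u 0 l + v 0 l * u 0 k != 0.
Proof.
move=> /rv_nz [k uk] Hv.
case: (boolP [exists l, v 0 k * u 0 l + v 0 l * u 0 k != 0]) => [/existsP [l Hl]|H].
  by exists k, l.
suff E : v = (v 0 k / u 0 k) *: u by move: (Hv (v 0 k / u 0 k)); rewrite -E eqxx.
apply/rowP => l; rewrite mxE.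
move: H; rewrite negb_exists => /forallP /(_ l); rewrite negbK => /eqP /eq_of_add0 E.
by rewrite mulrAC E mulfK.
Qed.

Lemma partner (om : F) (u v : 'rV[F]_n) : om ^+ 2 + om = 1 ->
  Phi 2 u -> Phi 2 v -> h u v = 0 -> (forall l : F, v != l *: u) ->
  exists y, [/\ h y y = 0, h v y = 1 & h u y = 0].
Proof.
move=> hom Pu Pv uv Hv.
have [k [l Dnz]] := indep_kl (proj1 (andP Pu)) Hv.
set d := v 0 k * u 0 l + v 0 l * u 0 k in Dnz.
pose f : 'rV[F]_n := (u 0 l) ^+ 2 *: delta_mx 0 k + (u 0 k) ^+ 2 *: delta_mx 0 l.
have hf x : h x f = u 0 l * x 0 k + u 0 k * x 0 l.
  by rewrite /f hD2 !hZ2 !h_delta_r !(cc F4).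
pose f1 := (d^-1) ^+ 2 *: f.
have vf1 : h v f1 = 1.
  rewrite /f1 hZ2 (cc F4) hf.
  have -> : u 0 l * v 0 k + u 0 k * v 0 l = d by rewrite /d; ring.
  by rewrite mulVf.
have uf1 : h u f1 = 0.
  by rewrite /f1 hZ2 hf [u 0 k * _]mulrC (addxx F4) mulr0.
pose y := f1 + (h f1 f1 * om / h v f1) *: v.
exists y; split.
- apply: iso_correct => //; first exact: Phi_iso.
  by rewrite vf1 oner_neq0.
- by rewrite /y hD2 hZ2 (Phi_iso Pv) mulr0 addr0.
- by rewrite /y hD2 hZ2 uv mulr0 addr0.
Qed.

Lemma typeO (om : F) (u v u' v' : 'rV[F]_n) : om ^+ 2 + om = 1 ->
  Phi 2 u -> Phi 2 v -> Phi 2 u' -> Phi 2 v' -> h u v = 0 -> h u' v' = 0 ->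
  (forall l : F, v != l *: u) -> (forall l : F, v' != l *: u') ->
  exists U, [/\ pres U, u *m U = u' & v *m U = v'].
Proof.
move=> hom Pu Pv Pu' Pv' uv uv' Hv Hv'.
have [y [yy vy uy]] := partner hom Pu Pv uv Hv.
have [y' [yy' vy' uy']] := partner hom Pu' Pv' uv' Hv'.
have Py : Phi 2 y.
  rewrite /Phi yy eqxx andbT; apply/eqP => y0; move: vy; rewrite y0 /herm big1 => [|k _].
    by move/eqP; rewrite eq_sym oner_eq0.
  by rewrite mxE (c0' F) mulr0.
have Py' : Phi 2 y'.
  rewrite /Phi yy' eqxx andbT; apply/eqP => y0; move: vy'; rewrite y0 /herm big1 => [|k _].
    by move/eqP; rewrite eq_sym oner_eq0.
  by rewrite mxE (c0' F) mulr0.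
have vyn : h v y != 0 by rewrite vy oner_neq0.
have [U1 [P1 E1 E2]] := typeH F4 hom Pv Py Pv' Py' (etrans vy (esym vy')) vyn.
pose u1 := u *m U1.
have u1v' : h u1 v' = 0 by rewrite -E1 /u1 P1 uv.
have u1y' : h u1 y' = 0 by rewrite -E2 /u1 P1 uy.
have hCz x y0 : h y0 x = 0 -> h x y0 = 0 by move=> e; rewrite (hC F4) e (c0' F).
pose pi := fun z => z + h z y' *: v' + h z v' *: y'.
have HP : forall z s, s = v' \/ s = y' -> h s (pi z) = 0.
  move=> z s [->|->]; rewrite !hD2 !hZ2 -!(hC F4 z).
    rewrite (Phi_iso Pv') vy' mulr0 mulr1 addr0; exact: (addxx F4).
  rewrite (Phi_iso Py') (hC F4 v' y') vy' expr1n mulr0 mulr1 addr0; exact: (addxx F4).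
have HP2 : forall z, h u1 (pi z) = h u1 z /\ h u' (pi z) = h u' z.
  move=> z; rewrite !hD2 !hZ2 u1v' u1y' uv' uy' !mulr0 !addr0; by split.
have HS : forall s, s = v' \/ s = y' -> h s u1 = 0 /\ h s u' = 0.
  move=> s [->|->]; split; apply: hCz => //.
have [U2 [P2 E3 F2]] := T_rel F4 hom (pres_Phi P1 Pu) Pu' HS HP HP2.
exists (U1 *m U2); split; first exact: pres_mul.
  by rewrite mulmxA -/u1 E3.
by rewrite mulmxA E1 F2 //; left.
Qed.
End TypeO.

Section PartB.
Variable F : finFieldType.
Hypothesis F4 : #|F| = 4%N.
Variable n : nat.
Local Notation h := (@herm F n 2).
Local Notation cD := (cD2 F4).
Local Notation hD2 := (@hD2 _ 2 cD).
Local Notation hD1 := (hD1 2).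
Local Notation hZ1 := (hZ1 2).
Local Notation hZ2 := (hZ2 2).

Lemma Phi_scale a (z : 'rV[F]_n) : a != 0 -> Phi 2 z -> Phi 2 (a *: z).
Proof.
move=> a0 /andP [nz /eqP iz]; apply/andP; split; first by rewrite scaler_eq0 negb_or a0.
by rewrite hZ1 hZ2 iz !mulr0.
Qed.

Lemma Lrev (om : F) (u v : 'rV[F]_n) : om ^+ 2 + om = 1 -> Phi 2 u -> Phi 2 v ->
  exists U, [/\ pres U, u *m U = cv v & v *m U = cv u].
Proof.
move=> hom Pu Pv.
case: (boolP [exists l : F, v == l *: u]) => [/existsP [l /eqP Ev]|H].
  have l0 : l != 0.
    apply: contraNneq (proj1 (andP Pv)) => l0; by rewrite Ev l0 scale0r.
  have P2 : Phi 2 (l ^+ 2 *: cv u) by apply: Phi_scale; [rewrite expf_neq0 | exact: Phi_cv].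
  have [U [PU EU _]] := T_rel F4 (S := fun _ => False) (P := id) hom Pu P2
    (fun _ f => False_ind _ f) (fun _ _ f => False_ind _ f) (fun _ => conj erefl erefl).
  exists U; split => //; first by rewrite EU Ev cvZ.
  by rewrite Ev -scalemxAl EU scalerA (sq_norm F4 l0) scale1r.
have Hv : forall l : F, v != l *: u.
  by move=> l; apply/negP => /eqP e; move: H; rewrite negb_exists => /forallP /(_ l); rewrite e eqxx.
case: (boolP (h u v == 0)) => [/eqP uv|nz].
  apply: (typeO F4 hom) => //; try exact: Phi_cv.
    by rewrite hcv.
  move=> l; apply/negP => /eqP e.
  have e2 : u = l ^+ 2 *: v by rewrite -(cvK F4 u) e cvZ (cvK F4).
  have l0 : l ^+ 2 != 0.
    apply: contraNneq (proj1 (andP Pu)) => l0; by rewrite e2 l0 scale0r.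
  move: (Hv (l ^+ 2)^-1); by rewrite e2 scalerA mulVf // scale1r eqxx.
apply: (typeH F4 hom) => //; try exact: Phi_cv.
by rewrite hcv.
Qed.

Lemma orb_mul (a b x z : 'rV[F]_n) (U : 'M[F]_n) : orbital 2 a b x z -> pres U -> orbital 2 a b (x *m U) (z *m U).
Proof.
case/existsP => W /and3P [GW /eqP -> /eqP ->] PU; apply/existsP; exists (W *m U).
rewrite !mulmxA !eqxx !andbT; apply: pres_GU; apply: pres_mul => //; exact: (GU_pres F4 GW).
Qed.

Lemma orb_rev (om : F) (a b u v : 'rV[F]_n) : om ^+ 2 + om = 1 -> Phi 2 u -> Phi 2 v ->
  orbital 2 a b u v -> orbital 2 a b (cv v) (cv u).
Proof.
move=> hom Pu Pv O; have [U [PU Eu Ev]] := Lrev hom Pu Pv.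
by rewrite -Eu -Ev; apply: orb_mul.
Qed.

Lemma count_le (om : F) (a b c d x y : 'rV[F]_n) : om ^+ 2 + om = 1 -> Phi 2 x -> Phi 2 y ->
  (#|[pred z | Phi 2 z && orbital 2 a b x z && orbital 2 c d z y]|
   <= #|[pred z | Phi 2 z && orbital 2 c d x z && orbital 2 a b z y]|)%N.
Proof.
move=> hom Px Py.
have [U0 [P0 Ex Ey]] := Lrev hom Px Py.
pose tau z := cv (z *m U0).
have inj : injective tau.
  move=> z1 z2 /(can_inj (@cvK F F4 n)); exact: pres_inj.
rewrite -(card_imset _ inj); apply: subset_leq_card; apply/subsetP => w /imsetP [z].
rewrite inE => /andP [/andP [Pz O1] O2] ->; rewrite inE.
have PzU : Phi 2 (z *m U0) by exact: pres_Phi.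
apply/andP; split; first (apply/andP; split).
- by apply: Phi_cv.
- have := orb_mul O2 P0; rewrite Ey => O.
  have := orb_rev hom PzU (Phi_cv F4 Px) O; by rewrite (cvK F4).
- have := orb_mul O1 P0; rewrite Ex => O.
  have := orb_rev hom (Phi_cv F4 Py) PzU O; by rewrite (cvK F4).
Qed.

Lemma partB : scheme_commutative F n 2.
Proof.
have [om hom] := omega_ex F4.
move=> a b c d x y _ _ _ _ Px Py; apply/eqP; rewrite eqn_leq.
by rewrite (count_le _ _ _ _ hom) // (count_le _ _ _ _ hom).
Qed.
End PartB.

Lemma elems (F : finFieldType) (q p k : nat) : prime p -> (0 < k)%N -> q = (p ^ k)%N ->
  #|F| = (q ^ 2)%N -> q != 2%N ->
  exists mu lam be : F, [/\ mu ^+ (q + 1) = -1, lam != 0, lam ^+ (q + 1) != 1,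
     be ^+ (q + 1) = 1 & be ^+ q != 1].
Proof.
move=> pp k0 Hq HF q2.
have p2 : (2 <= p)%N by apply: prime_gt1.
have pq : (p <= q)%N by rewrite Hq; case: k k0 {Hq} => // k' _; rewrite expnS leq_pmulr // expn_gt0 prime_gt0.
have q3 : (3 <= q)%N by move/eqP: q2; lia.
have chp : p \in [pchar F] by apply: card_finPcharP pp; rewrite HF Hq -expnM.
pose N := (q ^ 2).-1.
have N0 : (0 < N)%N by rewrite /N; nia.
have FN : #|F| = N.+1 by rewrite HF /N; nia.
have [g gin gprim] : exists2 g, g \in enum (predC1 (0:F)) & N.-primitive_root g.
  apply/hasP; apply: has_prim_root => //.
  - apply/allP => x; rewrite mem_enum inE => x0; rewrite unity_rootE.
    apply/eqP; apply: (mulIf x0); rewrite mul1r -exprSr -FN; exact: expf_card.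
  - exact: enum_uniq.
  - by rewrite -cardE cardC1 FN.
have gN := prim_expr_order gprim.
have eqg := eq_prim_root_expr gprim.
have g0 : g != 0.
  apply/eqP => g00; move: gN; rewrite g00 expr0n (negbTE (lt0n_neq0 N0)) /= => /eqP; by rewrite eq_sym oner_eq0.
have ne1 i : (0 < i < N)%N -> g ^+ i != 1.
  move=> /andP [i0 iN]; rewrite -(expr0 g) eqg mod0n modn_small //; by case: i i0 iN.
have mu_ex : exists mu : F, mu ^+ (q + 1) = -1.
  case: (boolP (p == 2%N)) => [/eqP p2'|pn2].
    exists 1; rewrite expr1n; apply/eqP; rewrite -subr_eq0 opprK.
    have := pcharf0 chp; rewrite p2' => e2; by rewrite -mulr2n e2.
  have oq : odd q.
    rewrite Hq oddX; apply/orP; right.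
    apply/negPn/negP => /(prime_oddPn pp) e; by rewrite e eqxx in pn2.
  pose m := q./2.
  have qm : q = (m.*2).+1 by rewrite /m -[q in LHS]odd_double_half oq.
  exists (g ^+ m); rewrite -exprM.
  set s := g ^+ (m * (q + 1)).
  have s2 : s ^+ 2 = 1 by rewrite /s -exprM -gN; congr (_ ^+ _); rewrite /N; nia.
  have s1 : s != 1 by apply: ne1; rewrite /N; apply/andP; split; nia.
  have : (s - 1) * (s + 1) = 0 by rewrite -subr_sqr expr1n s2 subrr.
  move/eqP; rewrite mulf_eq0 subr_eq0 (negbTE s1) /= addr_eq0 => /eqP //.
have [mu Hmu] := mu_ex.
exists mu, g, (g ^+ (q - 1)); split => //.
- by apply: ne1; rewrite /N; apply/andP; split; nia.
- by rewrite -exprM -gN; congr (_ ^+ _); rewrite /N; nia.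
- by rewrite -exprM; apply: ne1; rewrite /N; apply/andP; split; nia.
Qed.

Lemma partA (F : finFieldType) (n q p k : nat) : (2 <= n)%N -> prime p -> (0 < k)%N ->
  q = (p ^ k)%N -> #|F| = (q ^ 2)%N -> q != 2%N -> ~ scheme_commutative F n q.
Proof.
move=> n2 pp k0 Hq HF q2 Hcomm.
have [mu [lam [be [Hmu l0 l1 b1 bq]]]] := elems pp k0 Hq HF q2.
have chp : p \in [pchar F] by apply: card_finPcharP pp; rewrite HF Hq -expnM.
have pn : [pchar F].-nat q by rewrite (eq_pnat _ (pcharf_eq chp)) Hq pnatX pnat_id.
have cqD : forall x y : F, (x + y) ^+ q = x ^+ q + y ^+ q.
  by move=> x y; apply: exprDn_pchar.
have q0 : (0 < q)%N by rewrite Hq expn_gt0 prime_gt0.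
have c0 : (0 : F) ^+ q = 0 by rewrite expr0n eqn0Ngt q0.
have n0 : (0 < n)%N by lia.
have n1 : (1 < n)%N by lia.
pose i0 : 'I_n := Ordinal n0.
pose i1 : 'I_n := Ordinal n1.
have i01 : (i0 == i1) = false by [].
have i10 : (i1 == i0) = false by [].
have hd (i j : 'I_n) : herm q (delta_mx 0 i : 'rV[F]_n) (delta_mx 0 j) = (i == j)%:R.
  rewrite /herm (bigD1 i) //= big1 => [|l /negbTE li]; last by rewrite !mxE eq_sym li mulr0n mul0r.
  by rewrite !mxE !eqxx /= mul1r addr0; case: (i == j); rewrite ?expr1n.
pose e0 : 'rV[F]_n := delta_mx 0 i0.
pose e1 : 'rV[F]_n := delta_mx 0 i1.
have hab a b : herm q (e0 + a *: e1) (e0 + b *: e1) = 1 + a * b ^+ q.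
  rewrite (hD1 q) !(hD2 cqD) !(hZ1 q) !(hZ2 q) !hd eqxx i01 i10 /=.
  by rewrite !mulr0 !addr0 add0r mulr1.
have ent a : (e0 + a *: e1) 0 i0 = 1 by rewrite !mxE eqxx /= mulr0 addr0.
pose x := e0 + mu *: e1.
pose y := e0 + (mu * be) *: e1.
have hxx : herm q x x = 0 by rewrite hab -exprS -addn1 Hmu addrN.
have hyy : herm q y y = 0.
  by rewrite hab -exprS -addn1 exprMn Hmu b1 mulr1 addrN.
have hxy : herm q x y != 0.
  rewrite hab exprMn mulrA -exprS -addn1 Hmu mulN1r subr_eq0 eq_sym; exact: bq.
have nz a : e0 + a *: e1 != 0.
  apply/eqP => E; have := ent a; rewrite E mxE => /eqP; by rewrite eq_sym oner_eq0.
have Px : Phi q x by rewrite /Phi hxx eqxx andbT nz.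
have Py : Phi q y by rewrite /Phi hyy eqxx andbT nz.
have Plx : Phi q (lam *: x).
  rewrite /Phi (hZ1 q) (hZ2 q) hxx !mulr0 eqxx andbT scaler_eq0 negb_or l0 /=; exact: nz.
have G1 : in_GU q (1%:M : 'M[F]_n).
  rewrite /in_GU mul1mx; apply/eqP/matrixP => i j; rewrite !mxE eq_sym.
  by case: (i == j); rewrite /= ?expr1n ?mulr0n ?mulr1n ?c0.
have := Hcomm x (lam *: x) (lam *: x) y x y Px Plx Plx Py Px Py.
set A := [pred z | _]; set B := [pred z | _].
have -> : #|B| = 0%N.
  apply: eq_card0 => z; rewrite !inE; apply/negP => /andP [/andP [_ O1] O2].
  case/existsP: O1 => V /and3P [GV /eqP EV /eqP Ez].
  case/existsP: O2 => W /and3P [GW /eqP Ez' /eqP EW].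
  have yz : y = lam *: z by rewrite EW Ez' scalemxAl.
  have e1' : herm q x z = lam * herm q x y.
    transitivity (herm q (lam *: x *m V) (y *m V)); first by rewrite -EV -Ez.
    by rewrite (GU_inv cqD _ _ GV) (hZ1 q).
  have e2' : herm q x z = (lam^-1) ^+ q * herm q x y.
    by rewrite -(hZ2 q) yz scalerA mulVf // scale1r.
  have : lam = (lam^-1) ^+ q by apply: (mulIf hxy); rewrite -e1' -e2'.
  move=> E; move: l1; rewrite addn1 exprS {1}E -exprMn mulVf // expr1n eqxx //.
move=> E; have : (0 < #|A|)%N.
  apply/card_gt0P; exists (lam *: x); rewrite inE Plx /=.
  by apply/andP; split; apply/existsP; exists 1%:M; rewrite G1 !mulmx1 !eqxx.
by rewrite E.
Qed.


Unset Implicit Arguments. Set Strict Implicit.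

Theorem theorem4p1 (F : finFieldType) (n q : nat) :
  (2 <= n)%N ->
  (exists p k : nat, prime p /\ (0 < k)%N /\ q = (p ^ k)%N) ->
  #|F| = (q ^ 2)%N ->
  (scheme_commutative F n q <-> q = 2%N).
Proof.
move=> n2 [p [k [pp [k0 Hq]]]] HF; split.
- move=> Hc; apply/eqP; apply: contraT => q2; exfalso.
  exact: (partA n2 pp k0 Hq HF q2 Hc).
- move=> q2; rewrite q2 in HF *; exact: (@partB F HF n).
Qed.
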